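(* Let $p$ be an odd prime and let $O_2^+(\mathbb{F}_p)\subset GL_2(\mathbb{F}_p)$ be the group generated by $\xi=\begin{pmatrix}0&1\\1&0\end{pmatrix}$ and $\operatorname{diag}(c,c^{-1})$, $c\in\mathbb{F}_p^\times$ (the orthogonal group of the quadratic form $x_1x_2$, of order $2(p-1)$). It acts on $\mathbb{F}_p[x_1,x_2,y_1,y_2]$ by: $\xi$ swaps $x_1\leftrightarrow x_2$ and $y_1\leftrightarrow y_2$; $\operatorname{diag}(c,c^{-1})$ sends $x_1\mapsto cx_1,\ x_2\mapsto c^{-1}x_2,\ y_1\mapsto c^{-1}y_1,\ y_2\mapsto cy_2$. Then the invariant ring $\mathbb{F}_p[x_1,x_2,y_1,y_2]^{O_2^+(\mathbb{F}_p)}$ is generated as an $\mathbb{F}_p$-algebra by $$\{x_1x_2,\ y_1y_2,\ x_1y_1+x_2y_2,\ x_1^{p-1-i}y_2^i+x_2^{p-1-i}y_1^i \mid 0\le i\le p-1\}.$$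
   Context: This is the natural action on $\mathbb{F}_p[V\oplus V^*]$, $V=\mathbb{F}_p^2$: $x_1,x_2$ transform by $(x_1,x_2)^T\mapsto g(x_1,x_2)^T$ and $y_1,y_2$ by $(y_1,y_2)^T\mapsto (g^T)^{-1}(y_1,y_2)^T$, extended to $\mathbb{F}_p$-algebra automorphisms. *)

(* Defs.v *)
From HB Require Import structures.
From mathcomp Require Import all_boot all_order all_algebra all_field.
From mathcomp Require Import mpoly.
Set Implicit Arguments. Unset Strict Implicit. Unset Printing Implicit Defensive.
Import GRing.Theory.
Local Open Scope ring_scope.

Definition vx1 : 'I_4 := inord 0.
Definition vx2 : 'I_4 := inord 1.
Definition vy1 : 'I_4 := inord 2.
Definition vy2 : 'I_4 := inord 3.

Section Def.
Variable F : fieldType.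

Notation P4 := {mpoly F[4]}.

(* Natural action of g in GL_2 on F[V + V^*]:
   (x1,x2)^T |-> g (x1,x2)^T and (y1,y2)^T |-> (g^T)^{-1} (y1,y2)^T,
   extended to an F-algebra endomorphism (substitution). *)
Definition act_images (g : 'M[F]_2) : 4.-tuple P4 :=
  let h := invmx g^T in
  [tuple g 0 0 *: 'X_vx1 + g 0 1 *: 'X_vx2;
         g 1 0 *: 'X_vx1 + g 1 1 *: 'X_vx2;
         h 0 0 *: 'X_vy1 + h 0 1 *: 'X_vy2;
         h 1 0 *: 'X_vy1 + h 1 1 *: 'X_vy2].

Definition act (g : 'M[F]_2) (f : P4) : P4 := comp_mpoly (act_images g) f.

Definition xi_mx : 'M[F]_2 := \matrix_(i < 2, j < 2) (if i == j then 0 else 1).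
Definition dg_mx (c : F) : 'M[F]_2 :=
  \matrix_(i < 2, j < 2) (if i == j then (if i == 0 then c else c^-1) else 0).

Inductive O2plus : 'M[F]_2 -> Prop :=
  | O2_xi : O2plus xi_mx
  | O2_dg (c : F) : c != 0 -> O2plus (dg_mx c)
  | O2_one : O2plus 1%:M
  | O2_mul g h : O2plus g -> O2plus h -> O2plus (g *m h)
  | O2_inv g : O2plus g -> O2plus (invmx g).

Definition O2_invariant (f : P4) : Prop := forall g, O2plus g -> act g f = f.

Definition gen_list (p : nat) : seq P4 :=
  [:: 'X_vx1 * 'X_vx2; 'X_vy1 * 'X_vy2; 'X_vx1 * 'X_vy1 + 'X_vx2 * 'X_vy2]
  ++ [seq 'X_vx1 ^+ (p.-1 - i) * 'X_vy2 ^+ i + 'X_vx2 ^+ (p.-1 - i) * 'X_vy1 ^+ i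
       | i <- iota 0 p].

Lemma size_gen_list p : size (gen_list p) = (p + 3)%N.
Proof. by rewrite /gen_list size_cat size_map size_iota addnC. Qed.

Definition gens (p : nat) : (p + 3).-tuple P4 := Tuple (introT eqP (size_gen_list p)).

Definition in_gen_subalg (p : nat) (f : P4) : Prop :=
  exists P : {mpoly F[p + 3]}, f = comp_mpoly (gens p) P.

End Def.

(* Main.v *)
Require Import Defs.
From HB Require Import structures.
From mathcomp Require Import all_boot all_order all_algebra all_field.
From mathcomp Require Import mpoly ring zify.
Set Implicit Arguments. Unset Strict Implicit. Unset Printing Implicit Defensive.
Import GRing.Theory.
Local Open Scope ring_scope.


Section Mx.
Variable F : fieldType.

Lemma ord2P (i : 'I_2) : i = 0 \/ i = 1.
Proof. by case: i => [[|[|//]] hi]; [left|right]; apply/val_inj. Qed.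

Lemma mx2E (A B : 'M[F]_2) : A 0 0 = B 0 0 -> A 0 1 = B 0 1 -> A 1 0 = B 1 0 -> A 1 1 = B 1 1 -> A = B.
Proof.
move=> h00 h01 h10 h11; apply/matrixP=> i j.
by case: (ord2P i) => ->; case: (ord2P j) => ->.
Qed.

Lemma invmx_eq (A B : 'M[F]_2) : A *m B = 1%:M -> invmx A = B.
Proof.
move=> AB; have [Au _] := mulmx1_unit AB.
by rewrite -[invmx A]mulmx1 -AB mulmxA mulVmx // mul1mx.
Qed.

Ltac mxs := apply: mx2E; rewrite !mxE ?big_ord_recl ?big_ord0 ?mxE /=;
  rewrite ?mulr0 ?mul0r ?addr0 ?add0r ?mulr1 ?mul1r ?invfM ?invrK ?invr1.

Lemma dgM (c d : F) : dg_mx c *m dg_mx d = dg_mx (c * d).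
Proof. by mxs. Qed.

Lemma dg1 : dg_mx (1 : F) = 1%:M.
Proof. by mxs. Qed.

Lemma xixi : xi_mx F *m xi_mx F = 1%:M.
Proof. by mxs. Qed.

Lemma dgxi (c : F) : dg_mx c *m xi_mx F = xi_mx F *m dg_mx c^-1.
Proof. by mxs. Qed.

Lemma trdg (c : F) : (dg_mx c)^T = dg_mx c.
Proof. by mxs. Qed.

Lemma trxi : (xi_mx F)^T = xi_mx F.
Proof. by mxs. Qed.

Lemma dgV (c : F) : c != 0 -> invmx (dg_mx c) = dg_mx c^-1.
Proof. by move=> c0; apply: invmx_eq; rewrite dgM divff // dg1. Qed.

Lemma xidg_sq (c : F) : c != 0 -> (xi_mx F *m dg_mx c) *m (xi_mx F *m dg_mx c) = 1%:M.
Proof.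
move=> c0; rewrite mulmxA -(mulmxA (xi_mx F) (dg_mx c) (xi_mx F)) dgxi mulmxA xixi mul1mx dgM.
by rewrite mulVf // dg1.
Qed.

Definition O2form (g : 'M[F]_2) := exists2 c : F, c != 0 & (g = dg_mx c \/ g = xi_mx F *m dg_mx c).

Lemma O2plus_form g : O2plus g -> O2form g.
Proof.
elim=> {g}.
- exists 1; first exact: oner_neq0. by right; rewrite dg1 mulmx1.
- by move=> c c0; exists c => //; left.
- by exists 1; [exact: oner_neq0 | left; rewrite dg1].
- move=> g h _ [c c0 [->|->]] _ [d d0 [->|->]].
  + by exists (c * d); [rewrite mulf_neq0 | left; rewrite dgM].
  + exists (c^-1 * d); first by rewrite mulf_neq0 ?invr_eq0.
    by right; rewrite mulmxA dgxi -mulmxA dgM.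
  + by exists (c * d); [rewrite mulf_neq0 | right; rewrite -mulmxA dgM].
  + exists (c^-1 * d); first by rewrite mulf_neq0 ?invr_eq0.
    left; rewrite -mulmxA (mulmxA (dg_mx c)) dgxi -!mulmxA dgM mulmxA xixi mul1mx //.
- move=> g _ [c c0 [->|->]].
  + by exists c^-1; [rewrite invr_eq0 | left; rewrite dgV].
  + by exists c => //; right; apply: invmx_eq; rewrite xidg_sq.
Qed.
Notation P4 := {mpoly F[4]}.
Definition X1 : P4 := 'X_vx1.
Definition X2 : P4 := 'X_vx2.
Definition Y1 : P4 := 'X_vy1.
Definition Y2 : P4 := 'X_vy2.
Definition monF (a b c d : nat) : P4 := X1 ^+ a * X2 ^+ b * Y1 ^+ c * Y2 ^+ d.

Lemma XmE (m : 'X_{1..4}) : 'X_[m] = monF (m vx1) (m vx2) (m vy1) (m vy2).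
Proof.
rewrite mpolyXE_id !big_ord_recl big_ord0 mulr1 /monF !mulrA.
have e1 : vx1 = ord0 by apply/val_inj; rewrite /= inordK.
have e2 : vx2 = lift ord0 ord0 by apply/val_inj; rewrite /= inordK.
have e3 : vy1 = lift ord0 (lift ord0 ord0) by apply/val_inj; rewrite /= inordK.
have e4 : vy2 = lift ord0 (lift ord0 (lift ord0 ord0)) by apply/val_inj; rewrite /= inordK.
by rewrite /X1 /X2 /Y1 /Y2 e1 e2 e3 e4.
Qed.

Lemma act_X (g : 'M[F]_2) (i : 'I_4) : act g 'X_i = (act_images g)`_i.
Proof. by rewrite /act comp_mpolyXU. Qed.

Lemma act_mon (g : 'M[F]_2) a b c d : act g (monF a b c d) =
   (act g X1) ^+ a * (act g X2) ^+ b * (act g Y1) ^+ c * (act g Y2) ^+ d.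
Proof. by rewrite /act /monF !rmorphM !rmorphXn. Qed.

Lemma actX1 (g : 'M[F]_2) : act g X1 = g 0 0 *: X1 + g 0 1 *: X2.
Proof. by rewrite /X1 act_X /vx1 inordK. Qed.
Lemma actX2 (g : 'M[F]_2) : act g X2 = g 1 0 *: X1 + g 1 1 *: X2.
Proof. by rewrite /X2 act_X /vx2 inordK. Qed.
Lemma actY1 (g : 'M[F]_2) : act g Y1 = (invmx g^T) 0 0 *: Y1 + (invmx g^T) 0 1 *: Y2.
Proof. by rewrite /Y1 act_X /vy1 inordK. Qed.
Lemma actY2 (g : 'M[F]_2) : act g Y2 = (invmx g^T) 1 0 *: Y1 + (invmx g^T) 1 1 *: Y2.
Proof. by rewrite /Y2 act_X /vy2 inordK. Qed.

Lemma xidgE (e : F) : xi_mx F *m dg_mx e =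
  \matrix_(i < 2, j < 2) (if i == j then 0 else if i == 0 then e^-1 else e).
Proof. by mxs. Qed.

Lemma act_dg_mon (c : F) a b cc d : c != 0 ->
  act (dg_mx c) (monF a b cc d) = (c^+a * c^-1^+b * c^-1^+cc * c^+d) *: monF a b cc d.
Proof.
move=> c0; rewrite act_mon actX1 actX2 actY1 actY2 trdg dgV // !mxE /=.
rewrite ?invrK ?scale0r ?addr0 ?add0r !exprZn.
do 8! rewrite -?scalerAl -?scalerAr ?scalerA. rewrite /monF.
by congr (_ *: _); ring.
Qed.

Lemma act_xidg_mon (c : F) a b cc d : c != 0 ->
  act (xi_mx F *m dg_mx c) (monF a b cc d) = (c^-1^+a * c^+b * c^+cc * c^-1^+d) *: monF b a d cc.
Proof.
move=> c0; rewrite act_mon actX1 actX2 actY1 actY2 trmx_mul trdg trxi dgxi.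
rewrite (invmx_eq (xidg_sq (_ : c^-1 != 0))) ?invr_eq0 // !xidgE !mxE /= ?invrK.
rewrite ?invrK ?scale0r ?addr0 ?add0r !exprZn.
do 8! rewrite -?scalerAl -?scalerAr ?scalerA. rewrite /monF.
by congr (_ *: _); ring.
Qed.
End Mx.



Section Fp.
Variable p : nat.
Hypothesis hp : prime p.
Notation F := 'F_p.
Notation P4 := {mpoly F[4]}.

Lemma fermat (c : F) : c != 0 -> c ^+ p.-1 = 1.
Proof.
move=> c0; apply: (mulfI c0); rewrite mulr1 -exprS prednK ?prime_gt0 //.
by have := expf_card c; rewrite card_Fp.
Qed.

Lemma fermatV (c : F) : c != 0 -> c^-1 ^+ p.-1 = 1.
Proof. by move=> c0; rewrite exprVn fermat // invr1. Qed.

Lemma act_add (g : 'M[F]_2) (u v : P4) : act g (u + v) = act g u + act g v.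
Proof. by rewrite /act rmorphD. Qed.

Lemma gen_list_mon : gen_list F p =
  [:: monF F 1 1 0 0; monF F 0 0 1 1; monF F 1 0 1 0 + monF F 0 1 0 1]
  ++ [seq monF F (p.-1 - i) 0 0 i + monF F 0 (p.-1 - i) i 0 | i <- iota 0 p].
Proof.
rewrite /gen_list /monF /X1 /X2 /Y1 /Y2; congr (_ :: _ :: _ :: _).
- by rewrite !expr0 !expr1 !mulr1.
- by rewrite !expr0 !expr1 !mul1r.
- by rewrite !expr0 !expr1 !mulr1 !mul1r.
by apply: eq_map => i; rewrite !expr0 !mulr1 !mul1r.
Qed.

Lemma gen_inv q g : q \in gen_list F p -> O2plus g -> act g q = q.
Proof.
move=> qin /O2plus_form [c c0 [->|->]]; move: qin; rewrite gen_list_mon.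
- rewrite mem_cat !inE => /orP[/or3P[]/eqP->|/mapP[i]].
  + by rewrite act_dg_mon // !expr0 !expr1 mulr1 mulr1 mulfV ?scale1r.
  + by rewrite act_dg_mon // !expr0 !expr1 mul1r mul1r mulVf ?scale1r.
  + by rewrite act_add !act_dg_mon // !expr0 !expr1 !mulr1 !mul1r mulfV ?mulVf ?scale1r.
  + rewrite mem_iota add0n => /andP[_ ip] ->.
    rewrite act_add !act_dg_mon // !expr0 !mulr1 !mul1r -!exprD subnK; last by lia.
    by rewrite !fermat ?invr_eq0 // !scale1r.
- rewrite mem_cat !inE => /orP[/or3P[]/eqP->|/mapP[i]].
  + by rewrite act_xidg_mon // !expr0 !expr1 mulr1 mulr1 mulVf ?scale1r.
  + by rewrite act_xidg_mon // !expr0 !expr1 mul1r mul1r mulfV ?scale1r.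
  + rewrite act_add !act_xidg_mon // !expr0 !expr1 !mulr1 !mul1r mulfV ?mulVf ?scale1r //.
    by rewrite addrC.
  + rewrite mem_iota add0n => /andP[_ ip] ->.
    rewrite act_add !act_xidg_mon // !expr0 !mulr1 !mul1r -!exprD subnK; last by lia.
    by rewrite !fermat ?invr_eq0 // !scale1r addrC.
Qed.

Lemma subalg_inv (f : P4) : in_gen_subalg p f -> O2_invariant f.
Proof.
move=> [P ->] g hg; rewrite [in LHS]comp_mpolyE /act raddf_sum /=.
rewrite [RHS]comp_mpolyE; apply: eq_bigr => m _.
rewrite linearZ /= rmorph_prod; congr (_ *: _); apply: eq_bigr => i _.
rewrite rmorphXn; congr (_ ^+ _); apply: gen_inv => //.
by have := mem_tnth i (gens F p).
Qed.

End Fp.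



Section Fp.
Variable p : nat.
Hypothesis hp : prime p.
Notation F := 'F_p.
Notation P4 := {mpoly F[4]}.

Lemma exp_mod (c : F) x : c != 0 -> c ^+ x = c ^+ (x %% p.-1)%N.
Proof.
move=> c0; rewrite {1}(divn_eq x p.-1) exprD mulnC exprM fermat // expr1n mul1r.
by [].
Qed.

Lemma card_nz : size (enum (predC1 (0 : F))) = p.-1.
Proof. by rewrite -cardE cardC1 card_Fp. Qed.

Lemma weight_mod (x y : nat) : (forall c : F, c != 0 -> c ^+ x = c ^+ y) -> (x == y %[mod p.-1]).
Proof.
move=> h.
have p1 : (0 < p.-1)%N by have := prime_gt1 hp; lia.
have h' : forall c : F, c != 0 -> c ^+ (x %% p.-1)%N = c ^+ (y %% p.-1)%N.
  by move=> c c0; rewrite -!exp_mod // h.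
have lt1 := ltn_pmod x p1; have lt2 := ltn_pmod y p1.
move: (x %% p.-1)%N (y %% p.-1)%N h' lt1 lt2 => r1 r2.
wlog le12 : r1 r2 / (r1 <= r2)%N.
  move=> W h' l1 l2; case: (leqP r1 r2) => le; first exact: W.
  rewrite eq_sym; apply: W => //; first lia.
  by move=> c c0; rewrite h'.
move=> h' l1 l2; apply/eqP.
have hk : forall c : F, c != 0 -> c ^+ (r2 - r1) = 1.
  move=> c c0; apply: (@mulfI _ (c ^+ r1)); first by rewrite expf_neq0.
  by rewrite -exprD subnKC // mulr1 h'.
case: (posnP (r2 - r1)) => k0; first by lia.
have := @max_unity_roots F (r2 - r1)%N (enum (predC1 (0 : F))) k0.
rewrite card_nz enum_uniq => H.
have : (p.-1 <= r2 - r1)%N.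
  apply: H => //; apply/allP => c; rewrite mem_enum /= => c0.
  by rewrite unity_rootE hk.
lia.
Qed.

Lemma coef_diag (h : 'X_{1..4} -> F) (f : P4) m :
  (\sum_(m' <- msupp f) (f@_m' * h m') *: 'X_[m'])@_m = f@_m * h m.
Proof.
rewrite raddf_sum /=.
under eq_bigr => m' _ do rewrite mcoeffZ mcoeffX.
case: (boolP (m \in msupp f)) => hm.
  rewrite (bigD1_seq m) //= eqxx mulr1 big1 ?addr0 // => m' /negbTE ->.
  by rewrite mulr0.
rewrite (memN_msupp_eq0 hm) mul0r big1_seq // => m' /andP[_ hm'].
case: eqP => [e|]; last by rewrite mulr0.
by move: hm; rewrite -e hm'.
Qed.

Definition wt (m : 'X_{1..4}) := (m vx1 + m vy2 == m vx2 + m vy1 %[mod p.-1]).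

Lemma inv_weight (f : P4) m : O2_invariant f -> m \in msupp f -> wt m.
Proof.
move=> hf hm; apply: weight_mod => c c0.
have := hf _ (O2_dg c0).
rewrite {1}(mpolyE f) /act raddf_sum /=.
under eq_bigr => m' _ do rewrite linearZ /= -/(act _ _) XmE act_dg_mon // scalerA -XmE.
move=> /(congr1 (mcoeff m)); rewrite coef_diag.
move: hm; rewrite mcoeff_msupp => hm.
rewrite -[RHS]mulr1 => /(mulfI hm).
set a := m vx1; set b := m vx2; set cc := m vy1; set d := m vy2.
move=> e; apply: (@mulIf _ (c^-1 ^+ (b + cc))); first by rewrite expf_neq0 ?invr_eq0.
rewrite exprVn mulfV ?expf_neq0 // -e !exprD !exprVn; field.
by rewrite !expf_neq0.
Qed.

End Fp.



Section Fp.
Variable p : nat.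
Hypothesis hp : prime p.
Notation F := 'F_p.
Notation P4 := {mpoly F[4]}.
Notation A := (@in_gen_subalg F p).
Notation mon := (@monF F).

Lemma A_add u v : A u -> A v -> A (u + v).
Proof. by move=> [P ->] [Q ->]; exists (P + Q); rewrite raddfD. Qed.
Lemma A_sub u v : A u -> A v -> A (u - v).
Proof. by move=> [P ->] [Q ->]; exists (P - Q); rewrite raddfB. Qed.
Lemma A_mul u v : A u -> A v -> A (u * v).
Proof. by move=> [P ->] [Q ->]; exists (P * Q); rewrite rmorphM. Qed.
Lemma A_scale k u : A u -> A (k *: u).
Proof. by move=> [P ->]; exists (k *: P); rewrite linearZ. Qed.
Lemma A_1 : A 1.
Proof. by exists 1; rewrite comp_mpoly1. Qed.
Lemma A_0 : A 0.
Proof. by exists 0; rewrite comp_mpoly0. Qed.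

Lemma A_gen q : q \in gen_list F p -> A q.
Proof.
move=> /(nthP 0) [j jlt <-]; have jlt' : (j < p + 3)%N by rewrite -(size_gen_list F p).
by exists 'X_(Ordinal jlt'); rewrite comp_mpolyXU.
Qed.

Definition O a b c d := mon a b c d + mon b a d c.
Definition W (a b c d : nat) := (a + d == b + c %[mod p.-1]).

Lemma monM a b c d a' b' c' d' :
  mon a b c d * mon a' b' c' d' = mon (a + a') (b + b') (c + c') (d + d').
Proof. by rewrite /monF !exprD; ring. Qed.

Lemma Osym a b c d : O a b c d = O b a d c.
Proof. by rewrite /O addrC. Qed.

Lemma A_x1x2 : A (mon 1 1 0 0).
Proof. by apply: A_gen; rewrite gen_list_mon mem_cat !inE eqxx. Qed.
Lemma A_y1y2 : A (mon 0 0 1 1).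
Proof. by apply: A_gen; rewrite gen_list_mon mem_cat !inE eqxx orbT. Qed.
Lemma A_t : A (O 1 0 1 0).
Proof. by apply: A_gen; rewrite gen_list_mon mem_cat !inE eqxx !orbT. Qed.
Lemma A_g i : (i < p)%N -> A (O (p.-1 - i) 0 0 i).
Proof.
move=> ip; apply: A_gen; rewrite gen_list_mon mem_cat; apply/orP; right.
by apply/mapP; exists i; rewrite ?mem_iota.
Qed.

Lemma R1 a b c d : O a.+1 b.+1 c d = mon 1 1 0 0 * O a b c d.
Proof. by rewrite /O mulrDr !monM !add1n !add0n. Qed.
Lemma R2 a b c d : O a b c.+1 d.+1 = mon 0 0 1 1 * O a b c d.
Proof. by rewrite /O mulrDr !monM !add1n !add0n. Qed.
Lemma R3 a c : O a.+1 0 c.+1 0 = O 1 0 1 0 * O a 0 c 0 - O a 1 c 1.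
Proof.
rewrite /O mulrDr !mulrDl !monM !add1n ?add0n ?addn0 ?addn1.
ring.
Qed.
Lemma Rsplit a1 d1 a2 d2 :
  O a1 0 0 d1 * O a2 0 0 d2 = O (a1 + a2) 0 0 (d1 + d2) + O a1 a2 d2 d1.
Proof.
rewrite /O mulrDr !mulrDl !monM ?add0n ?addn0; ring.
Qed.

Lemma Wcong x y x' y' k : x' = (x + k)%N -> y' = (y + k)%N ->
  (x' == y' %[mod p.-1]) = (x == y %[mod p.-1]).
Proof. by move=> -> ->; rewrite eqn_modDr. Qed.

Lemma pair_ok a1 a2 d2 d1 : (0 < a1 + d1)%N -> (0 < a2 + d2)%N ->
  [|| (0 < a1)&&(0 < a2), (0 < d2)&&(0 < d1), (0 < a1)&&(0 < d2) | (0 < a2)&&(0 < d1)]%N.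
Proof.
by case: a1 => [|a1]; case: d1 => [|d1]; case: a2 => [|a2]; case: d2 => [|d2] //=; rewrite ?orbT.
Qed.

Section Step.
Variable N : nat.
Hypothesis IH : forall a b c d, (a + b + c + d < N)%N -> W a b c d -> A (O a b c d).

Lemma red3 a c : (a.+1 + c.+1 <= N)%N -> W a.+1 0 c.+1 0 -> A (O a.+1 0 c.+1 0).
Proof.
move=> hN hW; rewrite R3; apply: A_sub; first apply: A_mul A_t _.
  apply: IH; first lia.
  by move: hW; rewrite /W (@Wcong (a + 0) (0 + c) _ _ 1) //; lia.
case: a hN hW => [|a] hN hW.
  case: c hN hW => [|c] hN hW; first by rewrite Osym; exact: A_t.
  rewrite R2; apply: A_mul A_y1y2 _; apply: IH; first lia.
  by move: hW; rewrite /W (@Wcong (0 + 0) (1 + c) _ _ 1) //; lia.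
rewrite R1; apply: A_mul A_x1x2 _; apply: IH; first lia.
by move: hW; rewrite /W (@Wcong (a + 1) (0 + c) _ _ 1) //; lia.
Qed.

Lemma red a b c d : (a + b + c + d <= N)%N -> W a b c d ->
  [|| (0 < a)&&(0 < b), (0 < c)&&(0 < d), (0 < a)&&(0 < c) | (0 < b)&&(0 < d)]%N ->
  A (O a b c d).
Proof.
move=> hN hW hpair.
case: a b hN hW hpair => [|a] [|b] hN hW hpair.
- case: c d hN hW hpair => [|c] [|d] //= hN hW hpair.
  rewrite R2; apply: A_mul A_y1y2 _; apply: IH; first lia.
  by move: hW; rewrite /W (@Wcong (0 + d) (0 + c) _ _ 1) //; lia.
- case: c d hN hW hpair => [|c] [|d] //= hN hW hpair.
  + rewrite Osym; apply: red3; first lia.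
    by move: hW; rewrite /W eq_sym.
  + rewrite R2; apply: A_mul A_y1y2 _; apply: IH; first lia.
    by move: hW; rewrite /W (@Wcong (0 + d) (b.+1 + c) _ _ 1) //; lia.
- case: c d hN hW hpair => [|c] [|d] //= hN hW hpair.
  + apply: red3; first lia. by [].
  + rewrite R2; apply: A_mul A_y1y2 _; apply: IH; first lia.
    by move: hW; rewrite /W (@Wcong (a.+1 + d) (0 + c) _ _ 1) //; lia.
- rewrite R1; apply: A_mul A_x1x2 _; apply: IH; first lia.
  by move: hW; rewrite /W (@Wcong (a + d) (b + c) _ _ 1) //; lia.
Qed.


Lemma pure a d : (a + d <= N)%N -> W a 0 0 d -> A (O a 0 0 d).
Proof.
move=> hN hW.
have p1 : (0 < p.-1)%N by have := prime_gt1 hp; lia.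
have hdiv : (p.-1 %| a + d)%N by rewrite /dvdn; move: hW; rewrite /W add0n mod0n.
case: (posnP (a + d)) => [z|pos].
  have -> : a = 0%N by lia.
  have -> : d = 0%N by lia.
  by rewrite /O /monF !expr0 !mulr1; apply: A_add A_1 A_1.
have ge := dvdn_leq pos hdiv.
case: (ltngtP (a + d) p.-1) => hc; first lia.
  have [a1 [d1 [a2 [d2 [ea [ed e1]]]]]] : exists a1 d1 a2 d2,
      [/\ a = (a1 + a2)%N, d = (d1 + d2)%N & (a1 + d1)%N = p.-1].
    by exists (minn a p.-1), (p.-1 - minn a p.-1)%N, (a - minn a p.-1)%N,
      (d - (p.-1 - minn a p.-1))%N; split; lia.
  have e2 : (a2 + d2 = (a + d) - p.-1)%N by lia.
  have hdiv2 : (p.-1 %| a2 + d2)%N by rewrite e2 dvdn_sub.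
  rewrite ea ed (_ : O (a1 + a2) 0 0 (d1 + d2) = O a1 0 0 d1 * O a2 0 0 d2 - O a1 a2 d2 d1);
    last by rewrite Rsplit addrK.
  apply: A_sub; first apply: A_mul.
  - apply: IH; first lia.
    by rewrite /W add0n e1 modnn mod0n.
  - apply: IH; first lia.
    by rewrite /W add0n mod0n.
  - apply: red; first lia.
      rewrite /W e1 modnn eq_sym; exact: hdiv2.
    apply: pair_ok; lia.
rewrite (_ : a = p.-1 - d)%N; last by lia.
apply: A_g; lia.
Qed.

End Step.

Lemma core n : forall a b c d, (a + b + c + d < n)%N -> W a b c d -> A (O a b c d).
Proof.
elim: n => [//|n IH] a b c d hn hW.
have [hpair|hnp] := boolP
  [|| (0 < a)&&(0 < b), (0 < c)&&(0 < d), (0 < a)&&(0 < c) | (0 < b)&&(0 < d)]%N.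
  by apply: (red IH) => //; lia.
have : (b == 0)%N && (c == 0)%N || (a == 0)%N && (d == 0)%N.
  move: hnp; case: a {hn hW} => [|a]; case: b => [|b]; case: c => [|c]; case: d => [|d] //=;
    rewrite ?orbT //.
case/orP=> /andP[/eqP e1 /eqP e2]; subst.
  by apply: (pure IH) => //; lia.
rewrite Osym; apply: (pure IH); first lia.
by move: hW; rewrite /W eq_sym.
Qed.

End Fp.



Section Fp.
Variable p : nat.
Hypothesis hp : prime p.
Hypothesis hodd : odd p.
Notation F := 'F_p.
Notation P4 := {mpoly F[4]}.
Notation A := (@in_gen_subalg F p).

Lemma two_neq0 : (2%:R : F) != 0.
Proof.
have p2 : p != 2%N by apply/eqP => e; move: hodd; rewrite e.
have p3 : (2 < p)%N by have := prime_gt1 hp; lia.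
apply/eqP => /(congr1 (@nat_of_ord _)); rewrite val_Fp_nat // modn_small //.
Qed.

Lemma inv_subalg (f : P4) : O2_invariant f -> A f.
Proof.
move=> hf.
have hxi : act (xi_mx F) f = f := hf _ (@O2_xi _).
have actXm : forall m, act (xi_mx F) 'X_[m] = monF F (m vx2) (m vx1) (m vy2) (m vy1).
  move=> m; rewrite XmE -[xi_mx F]mulmx1 -dg1 act_xidg_mon ?oner_neq0 //.
  by rewrite invr1 !expr1n !mulr1 scale1r.
have eX : act (xi_mx F) f = \sum_(m <- msupp f) f@_m *: act (xi_mx F) 'X_[m].
  by rewrite {1}(mpolyE f) /act raddf_sum; apply: eq_bigr => m _; exact: comp_mpolyZ.
have e : f + act (xi_mx F) f =
    \sum_(m <- msupp f) f@_m *: O p (m vx1) (m vx2) (m vy1) (m vy2).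
  rewrite eX {1}(mpolyE f) -big_split; apply: eq_bigr => m _.
  by rewrite /O actXm XmE scalerDr.
have -> : f = (2%:R)^-1 *: (f + act (xi_mx F) f).
  by rewrite hxi -mulr2n -scaler_nat scalerA mulVf ?two_neq0 ?scale1r.
apply: A_scale; rewrite e big_seq; apply: big_ind.
- exact: A_0.
- exact: A_add.
move=> m hm; apply: A_scale; apply: (@core p hp (m vx1 + m vx2 + m vy1 + m vy2).+1) => //.
exact: (inv_weight hp hf hm).
Qed.

End Fp.

Theorem theorem1p2 (p : nat) (hp : prime p) (hodd : odd p) (f : {mpoly 'F_p[4]}) :
  O2_invariant f <-> in_gen_subalg p f.
Proof. by split; [apply: inv_subalg | apply: subalg_inv]. Qed.
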